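(* For all (well-formed, possibly open) call-by-value $\lambda$-terms $t$ and $s$, $t \approx_{\mathrm{nf}} s$ if and only if there exists a natural number $n > \max(\mathrm{fv}(t)\cup\mathrm{fv}(s))$ such that $\langle t, [], n\rangle_{\mathrm{ev}} \approx \langle s, [], n\rangle_{\mathrm{ev}}$, where $\approx$ is machine bisimilarity for the call-by-value NFB machine.
   Context: Terms: $t,s ::= f \mid x \mid \lambda x.t \mid t\,s$ and values $v ::= f \mid \lambda x.t$, where $f$ ranges over free variables (identified with natural numbers) and $x$ over bound variables; terms are well formed (every $x$ bound); $\mathrm{fv}(t)$ is the set of free variables. Stacks: $\pi ::= [\mathrm{arg}\ t]::\pi \mid [\mathrm{fun}\ v]::\pi \mid []$. CK machine configurations $\langle t,\pi\rangle_{\mathrm{ev}}$, $\langle \pi, v\rangle_{\mathrm{cont}}$, transitions: $\langle t\,s, \pi\rangle_{\mathrm{ev}} \to \langle t, [\mathrm{arg}\ s]::\pi\rangle_{\mathrm{ev}}$; $\langle v,\pi\rangle_{\mathrm{ev}}\to\langle\pi,v\rangle_{\mathrm{cont}}$; $\langle [\mathrm{arg}\ t]::\pi, v\rangle_{\mathrm{cont}} \to \langle t, [\mathrm{fun}\ v]::\pi\rangle_{\mathrm{ev}}$; $\langle [\mathrm{fun}\ \lambda x.t]::\pi, v\rangle_{\mathrm{cont}}\to\langle t\{v/x\},\pi\rangle_{\mathrm{ev}}$; $\to^*$ is the reflexive transitive closure. Normal-form bisimulation: a symmetric relation $\mathcal R$ on CK configurations such that $C\mathcal RC'$ implies (1)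 if $C\to^*\langle [], v\rangle_{\mathrm{cont}}$ then there is $v'$ with $C'\to^*\langle[],v'\rangle_{\mathrm{cont}}$ and for all fresh $f$, $\langle[\mathrm{fun}\ v]::[], f\rangle_{\mathrm{cont}}\,\mathcal R\,\langle[\mathrm{fun}\ v']::[], f\rangle_{\mathrm{cont}}$; (2) if $C\to^*\langle[\mathrm{fun}\ f]::\pi, v\rangle_{\mathrm{cont}}$ then there are $\pi',v'$ with $C'\to^*\langle[\mathrm{fun}\ f]::\pi',v'\rangle_{\mathrm{cont}}$ and for all fresh $f'$, $\langle[\mathrm{fun}\ v]::[],f'\rangle_{\mathrm{cont}}\,\mathcal R\,\langle[\mathrm{fun}\ v']::[],f'\rangle_{\mathrm{cont}}$ and $\langle\pi,f'\rangle_{\mathrm{cont}}\,\mathcal R\,\langle\pi',f'\rangle_{\mathrm{cont}}$. $\approx_{\mathrm{nf}}$ is the largest normal-form bisimulation on configurations, extended to terms by $t\approx_{\mathrm{nf}}s$ iff $\langle t,[]\rangle_{\mathrm{ev}}\approx_{\mathrm{nf}}\langle s,[]\rangle_{\mathrm{ev}}$. Call-by-value NFB machine: configurations $\langle t,\pi,n\rangle_{\mathrm{ev}}$ and $\langle\pi,v,n\rangle_{\mathrm{cont}}$ ($n\in\mathbb N$), plus, for each $\pi$, $v$, $n$, an intermediate configuration $I(\pi,v,n)$. Transitions: $\langle t\,s,\pi,n\rangle_{\mathrm{ev}}\xrightarrow\tau\langle t,[\mathrm{arg}\ s]::\pi,n\rangle_{\mathrm{ev}}$; $\langle v,\pi,n\rangle_{\mathrm{ev}}\xrightarrow\tau\langle\pi,v,n\rangle_{\mathrm{cont}}$;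 $\langle[\mathrm{arg}\ t]::\pi,v,n\rangle_{\mathrm{cont}}\xrightarrow\tau\langle t,[\mathrm{fun}\ v]::\pi,n\rangle_{\mathrm{ev}}$; $\langle[\mathrm{fun}\ \lambda x.t]::\pi,v,n\rangle_{\mathrm{cont}}\xrightarrow\tau\langle t\{v/x\},\pi,n\rangle_{\mathrm{ev}}$; $\langle[],v,n\rangle_{\mathrm{cont}}\xrightarrow{\lambda}\langle[\mathrm{fun}\ v]::[],n,n+1\rangle_{\mathrm{cont}}$; $\langle[\mathrm{fun}\ f]::\pi,v,n\rangle_{\mathrm{cont}}\xrightarrow{f}I(\pi,v,n)$ (flag is the number $f$), and $I(\pi,v,n)\xrightarrow{\mathsf{val}}\langle[\mathrm{fun}\ v]::[],n,n+1\rangle_{\mathrm{cont}}$, $I(\pi,v,n)\xrightarrow{\mathsf{ctx}}\langle\pi,n,n+1\rangle_{\mathrm{cont}}$. Machine bisimulation: a symmetric relation $\mathcal R$ on configurations such that $C_1\mathcal RC_2$ implies, for every flag $F$: if $C_1\xrightarrow\tau^*\xrightarrow F C_1'$ then $C_2\xrightarrow\tau^*\xrightarrow FC_2'$ for some $C_2'$ with $C_1'\mathcal RC_2'$, and if $C_1\xrightarrow\tau^*\xrightarrow F$ by a terminating transition, then so does $C_2$. $\approx$ is the largest machine bisimulation. *)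

(* Defs.v *)
(* Locally nameless representation of call-by-value lambda-terms:
   free variables f are natural numbers (TFree f), bound variables are
   de Bruijn indices (TBound i). *)
From Stdlib Require Import List Arith.
Import ListNotations.

Inductive term : Type :=
| TFree  (f : nat)
| TBound (i : nat)
| TLam   (t : term)
| TApp   (t s : term).

Fixpoint wf_at (k : nat) (t : term) : Prop :=
  match t with
  | TFree _ => True
  | TBound i => i < k
  | TLam b => wf_at (S k) b
  | TApp a b => wf_at k a /\ wf_at k b
  end.
Definition wf (t : term) : Prop := wf_at 0 t.

Fixpoint fv (t : term) : list nat :=
  match t with
  | TFree f => [f]
  | TBound _ => []
  | TLam b => fv b
  | TApp a b => fv a ++ fv b
  end.

Fixpoint open_rec (k : nat) (u : term) (t : term) : term :=
  match t with
  | TFree f => TFree f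
  | TBound i => if Nat.eqb i k then u else TBound i
  | TLam b => TLam (open_rec (S k) u b)
  | TApp a b => TApp (open_rec k u a) (open_rec k u b)
  end.
Definition open (body u : term) : term := open_rec 0 u body.

Inductive value : Type :=
| VFree (f : nat)
| VLam  (t : term).

Definition vterm (v : value) : term :=
  match v with VFree f => TFree f | VLam t => TLam t end.

Definition fv_value (v : value) : list nat := fv (vterm v).

Inductive frame : Type :=
| FArg (t : term)
| FFun (v : value).
Definition stack := list frame.

Definition fv_frame (fr : frame) : list nat :=
  match fr with FArg t => fv t | FFun v => fv_value v end.
Definition fv_stack (pi : stack) : list nat := flat_map fv_frame pi.

Inductive star {A : Type} (R : A -> A -> Prop) : A -> A -> Prop :=
| star_refl x : star R x x
| star_step x y z : R x y -> star R y z -> star R x z.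

Inductive ck_config : Type :=
| CEv   (t : term) (pi : stack)
| CCont (pi : stack) (v : value).

Definition fv_ck (C : ck_config) : list nat :=
  match C with
  | CEv t pi => fv t ++ fv_stack pi
  | CCont pi v => fv_stack pi ++ fv_value v
  end.

Inductive ck_step : ck_config -> ck_config -> Prop :=
| ck_app t s pi : ck_step (CEv (TApp t s) pi) (CEv t (FArg s :: pi))
| ck_val v pi : ck_step (CEv (vterm v) pi) (CCont pi v)
| ck_arg t pi v : ck_step (CCont (FArg t :: pi) v) (CEv t (FFun v :: pi))
| ck_beta t pi v :
    ck_step (CCont (FFun (VLam t) :: pi) v) (CEv (open t (vterm v)) pi).

(* normal-form bisimulation; "fresh" = not free in the two reached
   configurations *)
Definition is_nf_bisim (R : ck_config -> ck_config -> Prop) : Prop :=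
  (forall C C', R C C' -> R C' C) /\
  (forall C C', R C C' ->
     (forall v, star ck_step C (CCont [] v) ->
        exists v', star ck_step C' (CCont [] v') /\
          (forall f, ~ In f (fv_ck (CCont [] v)) -> ~ In f (fv_ck (CCont [] v')) ->
             R (CCont [FFun v] (VFree f)) (CCont [FFun v'] (VFree f)))) /\
     (forall f pi v, star ck_step C (CCont (FFun (VFree f) :: pi) v) ->
        exists pi' v', star ck_step C' (CCont (FFun (VFree f) :: pi') v') /\
          (forall f',
             ~ In f' (fv_ck (CCont (FFun (VFree f) :: pi) v)) ->
             ~ In f' (fv_ck (CCont (FFun (VFree f) :: pi') v')) ->
             R (CCont [FFun v] (VFree f')) (CCont [FFun v'] (VFree f')) /\
             R (CCont pi (VFree f')) (CCont pi' (VFree f'))))).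

Definition nf_bisim (C C' : ck_config) : Prop :=
  exists R, is_nf_bisim R /\ R C C'.

Definition nf_bisim_term (t s : term) : Prop :=
  nf_bisim (CEv t []) (CEv s []).

Inductive mconfig : Type :=
| MEv   (t : term) (pi : stack) (n : nat)
| MCont (pi : stack) (v : value) (n : nat)
| MInt  (pi : stack) (v : value) (n : nat).

Inductive flag : Type :=
| FlLam
| FlVar (f : nat)
| FlVal
| FlCtx.

Inductive label : Type :=
| Tau
| Flag (F : flag).

(* target None would denote a terminating transition; this machine has none *)
Inductive mstep : mconfig -> label -> option mconfig -> Prop :=
| m_app t s pi n :
    mstep (MEv (TApp t s) pi n) Tau (Some (MEv t (FArg s :: pi) n))
| m_val v pi n :
    mstep (MEv (vterm v) pi n) Tau (Some (MCont pi v n))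
| m_arg t pi v n :
    mstep (MCont (FArg t :: pi) v n) Tau (Some (MEv t (FFun v :: pi) n))
| m_beta t pi v n :
    mstep (MCont (FFun (VLam t) :: pi) v n) Tau (Some (MEv (open t (vterm v)) pi n))
| m_lam v n :
    mstep (MCont [] v n) (Flag FlLam) (Some (MCont [FFun v] (VFree n) (S n)))
| m_var f pi v n :
    mstep (MCont (FFun (VFree f) :: pi) v n) (Flag (FlVar f)) (Some (MInt pi v n))
| m_ival pi v n :
    mstep (MInt pi v n) (Flag FlVal) (Some (MCont [FFun v] (VFree n) (S n)))
| m_ictx pi v n :
    mstep (MInt pi v n) (Flag FlCtx) (Some (MCont pi (VFree n) (S n))).

Definition tau_step (C C' : mconfig) : Prop := mstep C Tau (Some C').

Definition is_machine_bisim (R : mconfig -> mconfig -> Prop) : Prop :=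
  (forall C1 C2, R C1 C2 -> R C2 C1) /\
  (forall C1 C2, R C1 C2 -> forall F : flag,
     (forall C1', (exists D1, star tau_step C1 D1 /\ mstep D1 (Flag F) (Some C1')) ->
        exists C2', (exists D2, star tau_step C2 D2 /\ mstep D2 (Flag F) (Some C2')) /\
                    R C1' C2') /\
     ((exists D1, star tau_step C1 D1 /\ mstep D1 (Flag F) None) ->
        exists D2, star tau_step C2 D2 /\ mstep D2 (Flag F) None)).

Definition machine_bisim (C1 C2 : mconfig) : Prop :=
  exists R, is_machine_bisim R /\ R C1 C2.

(* Main.v *)
Require Import Defs.
From Stdlib Require Import List Arith Lia.
Import ListNotations.

Definition next (C : mconfig) : list (label * mconfig) :=
  match C with
  | MEv (TApp t s) pi n => [(Tau, MEv t (FArg s :: pi) n)]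
  | MEv (TFree f) pi n => [(Tau, MCont pi (VFree f) n)]
  | MEv (TLam b) pi n => [(Tau, MCont pi (VLam b) n)]
  | MEv (TBound _) _ _ => []
  | MCont [] v n => [(Flag FlLam, MCont [FFun v] (VFree n) (S n))]
  | MCont (FArg t :: pi) v n => [(Tau, MEv t (FFun v :: pi) n)]
  | MCont (FFun (VLam t) :: pi) v n => [(Tau, MEv (open t (vterm v)) pi n)]
  | MCont (FFun (VFree f) :: pi) v n => [(Flag (FlVar f), MInt pi v n)]
  | MInt pi v n => [(Flag FlVal, MCont [FFun v] (VFree n) (S n));
                    (Flag FlCtx, MCont pi (VFree n) (S n))]
  end.

Lemma next_sound C l oC : mstep C l oC -> exists C', oC = Some C' /\ In (l, C') (next C).
Proof. destruct 1; try destruct v; simpl; eauto. Qed.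

Lemma next_complete C l C' : In (l, C') (next C) -> mstep C l (Some C').
Proof.
  destruct C as [t pi n|pi v n|pi v n];
   [destruct t| destruct pi as [|[t|[f|t]] pi] | ]; simpl; intros H;
   repeat (destruct H as [H|H]; [inversion H; subst;
     first [constructor | apply (m_val (VFree _)) | apply (m_val (VLam _))]|]);
   contradiction.
Qed.

Lemma mstep_none C l : ~ mstep C l None.
Proof. intro H. destruct (next_sound _ _ _ H) as [? [? _]]; discriminate. Qed.

Definition cnt (C : mconfig) : nat :=
  match C with MEv _ _ n | MCont _ _ n | MInt _ _ n => n end.

Lemma next_cnt C l C' : In (l, C') (next C) -> cnt C <= cnt C'.
Proof.
  destruct C as [t pi n|pi v n|pi v n];
   [destruct t| destruct pi as [|[t|[f|t]] pi] | ]; simpl; intros H;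
   repeat (destruct H as [H|H]; [inversion H; subst; simpl; lia|]); contradiction.
Qed.

Lemma next_tau_cnt C C' : In (Tau, C') (next C) -> cnt C' = cnt C.
Proof.
  destruct C as [t pi n|pi v n|pi v n];
   [destruct t| destruct pi as [|[t|[f|t]] pi] | ]; simpl; intros H;
   repeat (destruct H as [H|H]; [inversion H; subst; simpl; lia|]); contradiction.
Qed.

Lemma tau_cnt C C' : tau_step C C' -> cnt C' = cnt C.
Proof. intro H. destruct (next_sound _ _ _ H) as [? [E I]]; inversion E; subst.
  eapply next_tau_cnt; eauto. Qed.

Lemma star_tau_cnt C D : star tau_step C D -> cnt D = cnt C.
Proof. induction 1; auto. rewrite IHstar. eapply tau_cnt; eauto. Qed.

Lemma mstep_cnt C l C' : mstep C l (Some C') -> cnt C <= cnt C'.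
Proof. intro H. destruct (next_sound _ _ _ H) as [? [E I]]; inversion E; subst.
  eapply next_cnt; eauto. Qed.

Section Ren.
Variable rho : nat -> nat.
Fixpoint rn (t : term) : term :=
  match t with
  | TFree f => TFree (rho f)
  | TBound i => TBound i
  | TLam b => TLam (rn b)
  | TApp a b => TApp (rn a) (rn b)
  end.
Definition rv (v : value) : value :=
  match v with VFree f => VFree (rho f) | VLam t => VLam (rn t) end.
Definition rf (fr : frame) : frame :=
  match fr with FArg t => FArg (rn t) | FFun v => FFun (rv v) end.
Definition rs (pi : stack) : stack := map rf pi.
Definition rc (C : mconfig) : mconfig :=
  match C with
  | MEv t pi n => MEv (rn t) (rs pi) (rho n)
  | MCont pi v n => MCont (rs pi) (rv v) (rho n)
  | MInt pi v n => MInt (rs pi) (rv v) (rho n)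
  end.
Definition rfl (F : flag) : flag :=
  match F with FlVar f => FlVar (rho f) | F => F end.
Definition rlab (l : label) : label :=
  match l with Tau => Tau | Flag F => Flag (rfl F) end.

Lemma rn_open k u t : rn (open_rec k u t) = open_rec k (rn u) (rn t).
Proof. revert k; induction t; intros k; simpl; auto.
  destruct (Nat.eqb i k); auto. rewrite IHt; auto. rewrite IHt1, IHt2; auto. Qed.

Lemma rn_vterm v : rn (vterm v) = vterm (rv v).
Proof. destruct v; reflexivity. Qed.

Lemma next_ren C : rho (S (cnt C)) = S (rho (cnt C)) ->
  next (rc C) = map (fun p => (rlab (fst p), rc (snd p))) (next C).
Proof.
  destruct C as [t pi n|pi v n|pi v n];
   [destruct t| destruct pi as [|[t|[f|t]] pi] | ]; simpl; intros H; try rewrite H; auto.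
  unfold open. rewrite rn_open, rn_vterm. auto.
Qed.

Lemma rn_fix t : (forall x, In x (fv t) -> rho x = x) -> rn t = t.
Proof. induction t; simpl; intros H.
  - rewrite H; auto.
  - auto.
  - rewrite IHt; auto.
  - rewrite IHt1, IHt2; auto; intros; apply H; apply in_or_app; auto. Qed.

Lemma rv_fix v : (forall x, In x (fv_value v) -> rho x = x) -> rv v = v.
Proof. destruct v; simpl; intros H. rewrite H; simpl; auto. rewrite rn_fix; auto. Qed.

Lemma rs_fix pi : (forall x, In x (fv_stack pi) -> rho x = x) -> rs pi = pi.
Proof. induction pi as [|[t|v] pi IH]; simpl; intros H; auto.
  rewrite rn_fix, IH; auto; intros; apply H; apply in_or_app; auto.
  rewrite rv_fix, IH; auto; intros; apply H; apply in_or_app; auto. Qed.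

Variable n0 : nat.
Hypothesis Hrho : forall k, n0 <= k -> rho (S k) = S (rho k).

Lemma mstep_ren C l C' : n0 <= cnt C -> mstep C l (Some C') -> mstep (rc C) (rlab l) (Some (rc C')).
Proof. intros Hn H. destruct (next_sound _ _ _ H) as [Y [E I]]; inversion E; subst.
  apply next_complete. rewrite next_ren by auto.
  apply (in_map (fun p => (rlab (fst p), rc (snd p))) _ (l, Y)); auto. Qed.

Lemma mstep_ren_rev C l X : n0 <= cnt C -> mstep (rc C) l (Some X) ->
  exists l0 C', mstep C l0 (Some C') /\ l = rlab l0 /\ X = rc C'.
Proof. intros Hn H. destruct (next_sound _ _ _ H) as [? [E I]]; inversion E; subst.
  rewrite next_ren in I by auto. apply in_map_iff in I.
  destruct I as [[l0 C'] [E2 I]]. simpl in E2. inversion E2; subst.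
  exists l0, C'. split; auto. apply next_complete; auto. Qed.

Lemma star_ren C D : n0 <= cnt C -> star tau_step C D -> star tau_step (rc C) (rc D).
Proof. intros Hn H; induction H. constructor.
  econstructor. apply (mstep_ren _ Tau); eauto.
  apply IHstar. rewrite (tau_cnt _ _ H); auto. Qed.

Lemma star_ren_rev C D : n0 <= cnt C -> star tau_step (rc C) D ->
  exists E, star tau_step C E /\ D = rc E.
Proof. intros Hn H. remember (rc C) as X. revert C Hn HeqX.
  induction H; intros C Hn HX; subst.
  exists C; split; auto. constructor.
  destruct (mstep_ren_rev _ _ _ Hn H) as [l0 [C' [S1 [El Ey]]]].
  destruct l0; simpl in El; try discriminate. subst.
  destruct (IHstar C') as [E [S2 E2]]; auto.
  rewrite (tau_cnt _ _ S1); auto.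
  exists E; split; auto. econstructor; eauto. Qed.

Lemma ren_bisim C1 C2 : n0 <= cnt C1 -> n0 <= cnt C2 -> machine_bisim C1 C2 ->
  machine_bisim (rc C1) (rc C2).
Proof.
  intros H1 H2 [M [[Msym Mb] HM]].
  exists (fun X Y => exists C1 C2, M C1 C2 /\ n0 <= cnt C1 /\ n0 <= cnt C2 /\
                            X = rc C1 /\ Y = rc C2).
  split; [split|].
  - intros X Y [A [B [HAB [? [? [? ?]]]]]]. exists B, A; auto 10.
  - intros X Y [A [B [HAB [HA [HB [? ?]]]]]] F; subst. split.
    + intros X' [D1 [S1 St1]].
      destruct (star_ren_rev _ _ HA S1) as [E [SE ->]].
      assert (HE : n0 <= cnt E) by (rewrite (star_tau_cnt _ _ SE); auto).
      destruct (mstep_ren_rev _ _ _ HE St1) as [l0 [C' [St [El ->]]]].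
      destruct l0 as [|F0]; simpl in El; inversion El; subst.
      destruct (proj1 (Mb A B HAB F0) C') as [C2' [[D2 [SD2 StD2]] HM2]].
      { exists E; auto. }
      exists (rc C2'). split.
      * exists (rc D2). split. apply star_ren; auto.
        apply (mstep_ren _ (Flag F0)); auto. rewrite (star_tau_cnt _ _ SD2); auto.
      * exists C', C2'. split; auto. split.
        pose proof (mstep_cnt _ _ _ St); lia.
        split; auto. pose proof (mstep_cnt _ _ _ StD2).
        pose proof (star_tau_cnt _ _ SD2). lia.
    + intros [D1 [_ St]]. exfalso; eapply mstep_none; eauto.
  - exists C1, C2; auto.
Qed.
End Ren.

Definition emb (c : ck_config) (n : nat) : mconfig :=
  match c with CEv t pi => MEv t pi n | CCont pi v => MCont pi v n end.

Lemma ck_tau c c' n : ck_step c c' -> tau_step (emb c n) (emb c' n).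
Proof. destruct 1; simpl; constructor. Qed.

Lemma tau_ck c n X : tau_step (emb c n) X -> exists c', ck_step c c' /\ X = emb c' n.
Proof.
  intro H. destruct (next_sound _ _ _ H) as [Y [E I]]; inversion E; subst.
  destruct c as [t pi|pi v];
   [destruct t| destruct pi as [|[t|[f|t]] pi] ]; simpl in I;
   repeat (destruct I as [I|I]; [inversion I; subst|]); try contradiction.
  - exists (CCont pi (VFree f)); split; auto. apply (ck_val (VFree f)).
  - exists (CCont pi (VLam t)); split; auto. apply (ck_val (VLam t)).
  - eexists; split; [constructor|reflexivity].
  - eexists; split; [constructor|reflexivity].
  - eexists; split; [constructor|reflexivity].
Qed.

Lemma star_ck_tau c c' n : star ck_step c c' -> star tau_step (emb c n) (emb c' n).
Proof. induction 1. constructor. econstructor; eauto. apply ck_tau; auto. Qed.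

Lemma star_tau_ck c n D : star tau_step (emb c n) D -> exists d, star ck_step c d /\ D = emb d n.
Proof. intro H. remember (emb c n) as X. revert c HeqX. induction H; intros c HX; subst.
  exists c; split; auto; constructor.
  destruct (tau_ck _ _ _ H) as [c' [S1 ->]].
  destruct (IHstar c') as [d [S2 ->]]; auto. exists d; split; auto. econstructor; eauto. Qed.

Lemma emb_flag d n F X : mstep (emb d n) (Flag F) (Some X) ->
  (F = FlLam /\ exists v, d = CCont [] v /\ X = MCont [FFun v] (VFree n) (S n)) \/
  (exists f pi v, F = FlVar f /\ d = CCont (FFun (VFree f) :: pi) v /\ X = MInt pi v n).
Proof.
  intro H. destruct (next_sound _ _ _ H) as [Y [E I]]; inversion E; subst.
  destruct d as [t pi|pi v];
   [destruct t| destruct pi as [|[t|[f|t]] pi] ]; simpl in I;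
   repeat (destruct I as [I|I]; [inversion I; subst|]); try contradiction.
  - left; eauto.
  - right; eauto 10.
Qed.

Lemma int_flag pi v n F X : mstep (MInt pi v n) (Flag F) (Some X) ->
  (F = FlVal /\ X = MCont [FFun v] (VFree n) (S n)) \/
  (F = FlCtx /\ X = MCont pi (VFree n) (S n)).
Proof.
  intro H. destruct (next_sound _ _ _ H) as [Y [E I]]; inversion E; subst.
  simpl in I; repeat (destruct I as [I|I]; [inversion I; subst|]); try contradiction; auto.
Qed.

Lemma int_star pi v n D : star tau_step (MInt pi v n) D -> D = MInt pi v n.
Proof. intro H; inversion H; subst; auto.
  destruct (next_sound _ _ _ H0) as [Y [E I]]; inversion E; subst.
  simpl in I; repeat (destruct I as [I|I]; [inversion I; subst|]); contradiction. Qed.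

Lemma fv_open k u t x : In x (fv (open_rec k u t)) -> In x (fv t) \/ In x (fv u).
Proof. revert k; induction t; simpl; intros k H; auto.
  destruct (Nat.eqb i k); simpl in H; auto.
  eauto.
  rewrite in_app_iff in *. destruct H as [H|H].
  destruct (IHt1 _ H); auto. destruct (IHt2 _ H); auto. Qed.

Lemma ck_fv c c' x : ck_step c c' -> In x (fv_ck c') -> In x (fv_ck c).
Proof. destruct 1; simpl; unfold fv_value; simpl; rewrite ?in_app_iff; intros H.
  - tauto.
  - destruct v; simpl in *; tauto.
  - unfold fv_value in *; tauto.
  - destruct H as [H|H]; auto. apply fv_open in H. tauto.
Qed.

Lemma star_fv c c' x : star ck_step c c' -> In x (fv_ck c') -> In x (fv_ck c).
Proof. induction 1; auto. intros; eapply ck_fv; eauto. Qed.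

Definition bnd (l : list nat) (m : nat) := forall x, In x l -> x < m.

Definition Rm (c1 c2 : ck_config) : Prop :=
  exists m, bnd (fv_ck c1 ++ fv_ck c2) m /\ machine_bisim (emb c1 m) (emb c2 m).

Definition rho_of (m f : nat) (k : nat) : nat :=
  if k <? m then k else if k =? m then f else k + f.

Lemma key m pi1 pi2 f : bnd (fv_stack pi1 ++ fv_stack pi2) m ->
  machine_bisim (MCont pi1 (VFree m) (S m)) (MCont pi2 (VFree m) (S m)) ->
  Rm (CCont pi1 (VFree f)) (CCont pi2 (VFree f)).
Proof.
  intros Hb HM. exists (S m + f). split.
  - intros x Hx. simpl in Hx. rewrite !in_app_iff in Hx. simpl in Hx.
    destruct Hx as [[H|[H|H]]|[H|[H|H]]]; try contradiction; try lia;
    assert (x < m) by (apply Hb; apply in_app_iff; auto); lia.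
  - assert (Hr : forall k, S m <= k -> rho_of m f (S k) = S (rho_of m f k)).
    { intros k Hk. unfold rho_of.
      destruct (S k <? m) eqn:E1; [apply Nat.ltb_lt in E1; lia|].
      destruct (S k =? m) eqn:E2; [apply Nat.eqb_eq in E2; lia|].
      destruct (k <? m) eqn:E3; [apply Nat.ltb_lt in E3; lia|].
      destruct (k =? m) eqn:E4; [apply Nat.eqb_eq in E4; lia|]. lia. }
    pose proof (ren_bisim (rho_of m f) (S m) Hr _ _ (le_n (S m) : S m <= cnt (MCont pi1 (VFree m) (S m))) (le_n (S m) : S m <= cnt (MCont pi2 (VFree m) (S m))) HM) as H.
    assert (Hm : rho_of m f m = f).
    { unfold rho_of. rewrite Nat.ltb_irrefl, Nat.eqb_refl. auto. }
    assert (HSm : rho_of m f (S m) = S m + f).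
    { unfold rho_of. destruct (S m <? m) eqn:E1; [apply Nat.ltb_lt in E1; lia|].
      destruct (S m =? m) eqn:E2; [apply Nat.eqb_eq in E2; lia|]. lia. }
    simpl in H. rewrite Hm, HSm in H.
    rewrite !rs_fix in H. exact H.
    + intros x Hx. assert (x < m) by (apply Hb; apply in_app_iff; auto).
      unfold rho_of. destruct (x <? m) eqn:E; auto. apply Nat.ltb_ge in E; lia.
    + intros x Hx. assert (x < m) by (apply Hb; apply in_app_iff; auto).
      unfold rho_of. destruct (x <? m) eqn:E; auto. apply Nat.ltb_ge in E; lia.
Qed.

Lemma Rm_nf : is_nf_bisim Rm.
Proof.
  split.
  - intros c1 c2 [m [Hb [M [[Ms Mb] HM]]]]. exists m. split.
    intros x Hx; apply Hb; rewrite in_app_iff in *; tauto.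
    exists M; split; auto. split; auto.
  - intros c1 c2 [m [Hb [M [[Ms Mb] HM]]]]. split.
    + intros v Sv.
      destruct (proj1 (Mb _ _ HM FlLam) (MCont [FFun v] (VFree m) (S m))) as [C2' [[D2 [SD2 St2]] HM2]].
      { exists (MCont [] v m). split. apply (star_ck_tau _ _ m Sv). constructor. }
      destruct (star_tau_ck _ _ _ SD2) as [d [Sd ->]].
      destruct (emb_flag _ _ _ _ St2) as [[_ [v' [-> ->]]]|[f [pi [v0 [E _]]]]]; [|discriminate].
      exists v'. split; auto. intros f _ _.
      apply (key m). 2:{ exists M; split; auto. split; auto. }
      intros x Hx. simpl in Hx. rewrite !in_app_iff in Hx. simpl in Hx.
      destruct Hx as [[H|H]|[H|H]]; try contradiction; apply Hb; apply in_app_iff.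
      left. apply (star_fv _ _ _ Sv). simpl. auto.
      right. apply (star_fv _ _ _ Sd). simpl. auto.
    + intros f pi v Sv.
      destruct (proj1 (Mb _ _ HM (FlVar f)) (MInt pi v m)) as [C2' [[D2 [SD2 St2]] HM2]].
      { exists (MCont (FFun (VFree f) :: pi) v m). split. apply (star_ck_tau _ _ m Sv). constructor. }
      destruct (star_tau_ck _ _ _ SD2) as [d [Sd ->]].
      destruct (emb_flag _ _ _ _ St2) as [[E _]|[f0 [pi' [v' [E [-> ->]]]]]]; [discriminate|].
      inversion E; subst f0.
      exists pi', v'. split; auto. intros f' _ _.
      assert (Hb1 : forall x, In x (fv_ck (CCont (FFun (VFree f) :: pi) v)) -> x < m).
      { intros x Hx. apply Hb, in_app_iff; left. apply (star_fv _ _ _ Sv); auto. }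
      assert (Hb2 : forall x, In x (fv_ck (CCont (FFun (VFree f) :: pi') v')) -> x < m).
      { intros x Hx. apply Hb, in_app_iff; right. apply (star_fv _ _ _ Sd); auto. }
      simpl in Hb1, Hb2. unfold fv_value in *; simpl in *.
      split.
      * destruct (proj1 (Mb _ _ HM2 FlVal) (MCont [FFun v] (VFree m) (S m))) as [C3 [[D3 [SD3 St3]] HM3]].
        { exists (MInt pi v m). split. constructor. constructor. }
        apply int_star in SD3; subst D3.
        destruct (int_flag _ _ _ _ _ St3) as [[_ ->]|[E3 _]]; [|discriminate].
        apply (key m). 2:{ exists M; split; auto. split; auto. }
        intros x Hx. simpl in Hx. rewrite !in_app_iff in Hx. unfold fv_value in Hx.
        destruct Hx as [[H|H]|[H|H]]; try contradiction;
          [apply Hb1|apply Hb2]; rewrite !in_app_iff; auto.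
      * destruct (proj1 (Mb _ _ HM2 FlCtx) (MCont pi (VFree m) (S m))) as [C3 [[D3 [SD3 St3]] HM3]].
        { exists (MInt pi v m). split. constructor. constructor. }
        apply int_star in SD3; subst D3.
        destruct (int_flag _ _ _ _ _ St3) as [[E3 _]|[_ ->]]; [discriminate|].
        apply (key m). 2:{ exists M; split; auto. split; auto. }
        intros x Hx. rewrite !in_app_iff in Hx.
        destruct Hx as [H|H];
          [apply Hb1|apply Hb2]; rewrite !in_app_iff; auto.
Qed.

Section Fwd.
Variable R : ck_config -> ck_config -> Prop.
Hypothesis HR : is_nf_bisim R.

Definition Mrel (X Y : mconfig) : Prop :=
  (exists c1 c2 m, X = emb c1 m /\ Y = emb c2 m /\ bnd (fv_ck c1 ++ fv_ck c2) m /\ R c1 c2) \/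
  (exists pi v pi' v' m, X = MInt pi v m /\ Y = MInt pi' v' m /\
     bnd (fv_stack pi ++ fv_value v ++ fv_stack pi' ++ fv_value v') m /\
     R (CCont [FFun v] (VFree m)) (CCont [FFun v'] (VFree m)) /\
     R (CCont pi (VFree m)) (CCont pi' (VFree m))).

Lemma Mrel_bisim : is_machine_bisim Mrel.
Proof.
  destruct HR as [Rs Rb]. split.
  - intros X Y [[c1 [c2 [m [-> [-> [Hb H]]]]]]|[pi [v [pi' [v' [m [-> [-> [Hb [H1 H2]]]]]]]]]].
    + left. exists c2, c1, m. repeat split; auto.
      intros x Hx; apply Hb; rewrite in_app_iff in *; tauto.
    + right. exists pi', v', pi, v, m. repeat split; auto.
      intros x Hx; apply Hb; rewrite !in_app_iff in *; tauto.
  - intros X Y HXY F. split; [|intros [D1 [_ St]]; exfalso; eapply mstep_none; eauto].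
    intros X' [D1 [S1 St1]].
    destruct HXY as [[c1 [c2 [m [-> [-> [Hb H]]]]]]|[pi [v [pi' [v' [m [-> [-> [Hb [H1 H2]]]]]]]]]].
    + destruct (star_tau_ck _ _ _ S1) as [d [Sd ->]].
      destruct (Rb _ _ H) as [Cl1 Cl2].
      destruct (emb_flag _ _ _ _ St1) as [[-> [v [-> ->]]]|[f [pi [v [-> [-> ->]]]]]].
      * destruct (Cl1 v Sd) as [v' [Sv' Hv']].
        exists (MCont [FFun v'] (VFree m) (S m)). split.
        { exists (MCont [] v' m). split. apply (star_ck_tau _ _ m Sv'). constructor. }
        assert (B1 : forall x, In x (fv_value v) -> x < m).
        { intros x Hx; apply Hb, in_app_iff; left. apply (star_fv _ _ _ Sd); simpl; auto. }
        assert (B2 : forall x, In x (fv_value v') -> x < m).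
        { intros x Hx; apply Hb, in_app_iff; right. apply (star_fv _ _ _ Sv'); simpl; auto. }
        left. exists (CCont [FFun v] (VFree m)), (CCont [FFun v'] (VFree m)), (S m).
        repeat split; auto.
        -- intros x Hx. simpl in Hx. unfold fv_value in *. rewrite !in_app_iff in Hx. simpl in Hx.
           destruct Hx as [[[H0|H0]|[H0|H0]]|[[H0|H0]|[H0|H0]]];
             try contradiction; try lia; [apply B1 in H0|apply B2 in H0]; lia.
        -- apply Hv'; simpl; intro Hin; unfold fv_value in *; simpl in Hin;
           [apply B1 in Hin|apply B2 in Hin]; lia.
      * destruct (Cl2 f pi v Sd) as [pi' [v' [Sv' Hv']]].
        exists (MInt pi' v' m). split.
        { exists (MCont (FFun (VFree f) :: pi') v' m). split. apply (star_ck_tau _ _ m Sv'). constructor. }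
        assert (B1 : forall x, In x (fv_ck (CCont (FFun (VFree f) :: pi) v)) -> x < m).
        { intros x Hx; apply Hb, in_app_iff; left. apply (star_fv _ _ _ Sd); auto. }
        assert (B2 : forall x, In x (fv_ck (CCont (FFun (VFree f) :: pi') v')) -> x < m).
        { intros x Hx; apply Hb, in_app_iff; right. apply (star_fv _ _ _ Sv'); auto. }
        destruct (Hv' m) as [Ha Hc].
        { intro Hin; apply B1 in Hin; lia. }
        { intro Hin; apply B2 in Hin; lia. }
        right. exists pi, v, pi', v', m. repeat split; auto.
        intros x Hx. simpl in B1, B2. unfold fv_value in *; simpl in *.
        rewrite !in_app_iff in Hx.
        destruct Hx as [H0|[H0|[H0|H0]]]; [apply B1|apply B1|apply B2|apply B2];
          rewrite !in_app_iff; auto.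
    + apply int_star in S1; subst D1.
      destruct (int_flag _ _ _ _ _ St1) as [[-> ->]|[-> ->]].
      * exists (MCont [FFun v'] (VFree m) (S m)). split.
        { exists (MInt pi' v' m). split. constructor. constructor. }
        left. exists (CCont [FFun v] (VFree m)), (CCont [FFun v'] (VFree m)), (S m).
        repeat split; auto.
        intros x Hx. simpl in Hx. unfold fv_value in *. rewrite !in_app_iff in Hx. simpl in Hx.
        destruct Hx as [[[H0|H0]|[H0|H0]]|[[H0|H0]|[H0|H0]]];
          try contradiction; try lia;
          assert (x < m) by (apply Hb; unfold fv_value; rewrite !in_app_iff; auto); lia.
      * exists (MCont pi' (VFree m) (S m)). split.
        { exists (MInt pi' v' m). split. constructor. constructor. }
        left. exists (CCont pi (VFree m)), (CCont pi' (VFree m)), (S m).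
        repeat split; auto.
        intros x Hx. simpl in Hx. unfold fv_value in *. rewrite !in_app_iff in Hx. simpl in Hx.
        destruct Hx as [[H0|[H0|H0]]|[H0|[H0|H0]]];
          try contradiction; try lia;
          assert (x < m) by (apply Hb; unfold fv_value; rewrite !in_app_iff; auto); lia.
Qed.
End Fwd.

Lemma list_bound (l : list nat) : forall x, In x l -> x < S (list_max l).
Proof. induction l; simpl; intros x H; [contradiction|].
  destruct H as [->|H]; [lia|]. apply IHl in H. lia. Qed.

Theorem theorem6p3 (t s : term) :
  wf t -> wf s ->
  (nf_bisim_term t s <->
   exists n : nat,
     (forall f, In f (fv t ++ fv s) -> f < n) /\
     machine_bisim (MEv t nil n) (MEv s nil n)).
Proof.
  intros _ _. split.
  - intros [R [HR H]]. exists (S (list_max (fv t ++ fv s))). split.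
    apply list_bound.
    exists (Mrel R). split. apply Mrel_bisim; auto.
    left. exists (CEv t []), (CEv s []), (S (list_max (fv t ++ fv s))).
    repeat split; auto.
    intros x Hx. apply list_bound. simpl in Hx. rewrite !app_nil_r in Hx. auto.
  - intros [n [Hb HM]]. exists Rm. split. apply Rm_nf.
    exists n. split; auto.
    intros x Hx. apply Hb. simpl in Hx. rewrite !app_nil_r in Hx. auto.
Qed.
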